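(* Assume $n\ge 3t+1$. In any execution of COOL, if $\eta^{[2]}=2$ then $\eta^{[1]}=2$.
   Context: Setting. $n$ processors indexed by $[1:n]$, pairwise joined by reliable private synchronous channels; recipients know senders. At most $t$ processors are dishonest, controlled by an adversary who may make them deviate arbitrarily (missing values replaced by a fixed default); the others are honest. Processor $i$ holds an $\ell$-bit initial message $\boldsymbol w_i$. $\phi$ is a default value different from every $\ell$-bit message. Logarithms are base 2. Code. $k=\lfloor t/5\rfloor+1$, $c=\lceil \max\{\ell,(t/5+1)\log(n+1)\}/k\rceil$. Messages are zero-padded to $kc$ bits and viewed in $GF(2^c)^k$. Integers in $[1:n]$ are identified with distinct nonzero elements of $GF(2^c)$; $\boldsymbol h_i\in GF(2^c)^k$ has entries $h_{i,j}=\prod_{p\in[1:k],\,p\ne j}\frac{i-p}{j-p}$ (field arithmetic). COOL, Phases 1–2 (honest processor $i$). Initialization: updated message $\boldsymbol w^{(i)}:=\boldsymbol w_i$, $y^{(i)}_j:=\boldsymbol h_j^{\mathsf T}\boldsymbol w_i$, $u_i(i):=1$. Phase 1. (a) Send $(y^{(i)}_j,y^{(i)}_i)$ to each $j\ne i$. (b) For $j\ne i$, link indicator $u_i(j):=1$ if the pair received from $j$ equals $(y^{(i)}_i,y^{(i)}_j)$, else $0$. Success indicator $s_i:=1$ if $\sum_{j=1}^n u_i(j)\ge n-t$; otherwise $s_i:=0$ and $\boldsymbol w^{(i)}:=\phi$. (c) Send $s_i$ to all; each processor records the indicator received from each $j$ (own for itself) and forms $\mathcal S_1=\{j:s_j=1\}$,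 $\mathcal S_0=\{j:s_j=0\}$ (views may differ between processors). Phase 2. If $s_i=1$: set $u_i(j):=0$ for all $j\in\mathcal S_0$; if now $\sum_j u_i(j)<n-t$, set $s_i:=0$, $\boldsymbol w^{(i)}:=\phi$ and send $s_i=0$ to all. Everyone overwrites recorded indicators with newly received ones and recomputes $\mathcal S_0,\mathcal S_1$. Notation. For $p\in\{1,2\}$, $s^{[p]}_i$ is the value of honest processor $i$'s success indicator at the end of Phase $p$, and $\eta^{[p]}$ is the number of distinct values in $\{\boldsymbol w_i: i\text{ honest},\ s^{[p]}_i=1\}$ (initial messages). *)

(* Defs.v *)
From mathcomp Require Import all_boot all_order all_algebra.
Set Implicit Arguments. Unset Strict Implicit. Unset Printing Implicit Defensive.
Import GRing.Theory.
Local Open Scope ring_scope.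

Definition cool_k (t : nat) : nat := (t %/ 5 + 1)%N.

(* c = ceil( max{ l, (t/5 + 1) log2(n+1) } / k ), characterised exactly as the
   least natural c with  k c >= l  and  k c >= ((t+5)/5) log2(n+1),
   the latter being equivalent to  (n+1)^(t+5) <= 2^(5 k c). *)
Definition cool_c_ok (n t l c : nat) : bool :=
  (l <= cool_k t * c)%N && ((n.+1) ^ (t + 5) <= 2 ^ (5 * (cool_k t * c)))%N.

Definition is_cool_c (n t l c : nat) : Prop :=
  cool_c_ok n t l c /\ forall c', cool_c_ok n t l c' -> (c <= c')%N.

(* Processors are 'I_n (0-based: index m stands for processor m+1).
   alpha m is the nonzero field element identified with the integer m+1.
   enc encodes an l-bit message (zero-padded) as a vector of GF(2^c)^k. *)
Section COOL.
Variables (F : fieldType) (n t l : nat) (alpha : nat -> F)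
  (enc : l.-tuple bool -> 'rV[F]_(cool_k t))
  (D : {set 'I_n})
  (w : 'I_n -> l.-tuple bool)
  (adv1 : 'I_n -> 'I_n -> F * F)        (* adv1 j i : pair sent by dishonest j to i in Phase 1(a) *)
  (adv2 : 'I_n -> 'I_n -> bool).        (* adv2 j i : indicator sent by dishonest j to i in Phase 1(c) *)

Local Notation k := (cool_k t).

Definition cool_h (i : nat) (j : 'I_k) : F :=
  \prod_(p < k | p != j) ((alpha i - alpha p) / (alpha j - alpha p)).

Definition cool_y (i j : 'I_n) : F :=
  \sum_(jj < k) cool_h j jj * enc (w i) 0 jj.

Definition honest (i : 'I_n) : bool := i \notin D.

(* Pair received by i from j in Phase 1(a). *)
Definition msg1 (i j : 'I_n) : F * F :=
  if honest j then (cool_y j i, cool_y j j) else adv1 j i.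

(* Link indicator u_i(j) after Phase 1(b). *)
Definition u1 (i j : 'I_n) : bool :=
  (j == i) || (msg1 i j == (cool_y i i, cool_y i j)).

Definition s1 (i : 'I_n) : bool := (n - t <= #|[set j | u1 i j]|)%N.

(* Indicator of j as recorded by i after Phase 1(c) (own for j = i). *)
Definition ind1 (i j : 'I_n) : bool := if honest j then s1 j else adv2 j i.

(* s^{[2]}_i : after zeroing u_i(j) for j in S_0 (i's view). *)
Definition s2 (i : 'I_n) : bool :=
  s1 i && (n - t <= #|[set j | u1 i j && ind1 i j]|)%N.

Definition eta (s : 'I_n -> bool) : nat :=
  #|[set w i | i in [set i | honest i && s i]]|.

End COOL.

(* Main.v *)
Require Import Defs.
From mathcomp Require Import all_boot all_order all_algebra.
From mathcomp Require Import zify.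
Set Implicit Arguments. Unset Strict Implicit. Unset Printing Implicit Defensive.
Import GRing.Theory.
Local Open Scope ring_scope.

Lemma lagrange_h (F : fieldType) (n t : nat) (alpha : nat -> F)
  (Hk : (cool_k t <= n)%N)
  (Hinj : {in [pred m : nat | (m < n)%N] &, injective alpha})
  (p jj : 'I_(cool_k t)) :
  cool_h alpha p jj = (p == jj)%:R.
Proof.
rewrite /cool_h.
have ltp : forall q : 'I_(cool_k t), (q < n)%N.
  by move=> q; exact: leq_trans (ltn_ord q) Hk.
have neq : forall q r : 'I_(cool_k t), q != r -> alpha q != alpha r.
  move=> q r; apply: contra => /eqP E; apply/eqP; apply: val_inj.
  by apply: (Hinj _ _ _ _ E); rewrite inE /= ltp.
case: (eqVneq p jj) => [->|pj].
  apply: big1 => q qj; rewrite divff // subr_eq0.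
  by apply: neq; rewrite eq_sym.
by rewrite (bigD1 p pj) /= subrr !mul0r.
Qed.

Lemma rs_agree (F : fieldType) (n t l : nat) (alpha : nat -> F)
  (enc : l.-tuple bool -> 'rV[F]_(cool_k t)) (w : 'I_n -> l.-tuple bool)
  (a b : 'I_n) :
  (cool_k t <= n)%N ->
  {in [pred m : nat | (m < n)%N] &, injective alpha} ->
  enc (w a) != enc (w b) ->
  (#|[set j : 'I_n | cool_y alpha enc w a j == cool_y alpha enc w b j]| < cool_k t)%N.
Proof.
move=> Hk Hinj Hne.
set k := cool_k t.
pose v := fun jj : 'I_k => enc (w a) 0 jj - enc (w b) 0 jj.
pose P : {poly F} := \sum_(jj < k) (v jj * \prod_(q < k | q != jj) (alpha jj - alpha q)^-1)
   *: \prod_(q < k | q != jj) ('X - (alpha q)%:P).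
have evalP : forall x : nat, P.[alpha x] = \sum_(jj < k) cool_h alpha x jj * v jj.
  move=> x; rewrite horner_sum; apply: eq_bigr => jj _.
  rewrite hornerZ horner_prod.
  under eq_bigr do rewrite hornerXsubC.
  rewrite /cool_h [RHS]mulrC -mulrA; congr (_ * _).
  by rewrite -big_split /=; apply: eq_bigr => q _; rewrite mulrC.
have cy : forall j : 'I_n, cool_y alpha enc w a j - cool_y alpha enc w b j = P.[alpha j].
  move=> j; rewrite evalP /cool_y -sumrB; apply: eq_bigr => jj _.
  by rewrite /v mulrBr.
have sizeP : (size P <= k)%N.
  rewrite /P; apply: (big_ind (fun p : {poly F} => size p <= k)%N).
  - by rewrite size_poly0.
  - move=> p q Hp Hq; apply: leq_trans (size_polyD _ _) _; by rewrite geq_max Hp Hq.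
  - move=> jj _; apply: leq_trans (size_scale_leq _ _) _.
    rewrite (eq_bigl (mem (predC1 jj))) // -big_enum size_prod_XsubC -cardE cardC1 card_ord.
    by rewrite /k /cool_k addn1.
have P0 : P != 0.
  apply/eqP => P0; move/eqP: Hne; apply; apply/rowP => jj.
  have E := evalP jj.
  rewrite P0 horner0 (bigD1 jj) //= (lagrange_h Hk Hinj) eqxx mul1r big1 ?addr0 in E.
    by apply/eqP; rewrite -subr_eq0 -[_ - _]/(v jj) -E.
  by move=> q qj; rewrite (lagrange_h Hk Hinj) eq_sym (negPf qj) mul0r.
set Z := [set j : 'I_n | _].
have := max_poly_roots P0 (rs := [seq alpha (val j) | j <- enum Z]).
rewrite size_map -cardE => H; apply: leq_trans (H _ _) sizeP.
  apply/allP => x /mapP [j]; rewrite mem_enum inE => /eqP Ej ->.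
  by rewrite /root -cy Ej subrr.
rewrite (map_inj_in_uniq (f := fun j : 'I_n => alpha (val j))) ?enum_uniq //.
move=> x y _ _ E; apply: val_inj; apply: (Hinj _ _ _ _ E); by rewrite inE /=.
Qed.

Lemma inter_sub (F : fieldType) (n t l : nat) (alpha : nat -> F)
  (enc : l.-tuple bool -> 'rV[F]_(cool_k t)) (D : {set 'I_n})
  (w : 'I_n -> l.-tuple bool) (adv1 : 'I_n -> 'I_n -> F * F) (a b : 'I_n) :
  a != b ->
  [set j | honest D j && u1 alpha enc D w adv1 a j] :&:
  [set j | honest D j && u1 alpha enc D w adv1 b j] \subset
  [set j : 'I_n | cool_y alpha enc w a j == cool_y alpha enc w b j].
Proof.
move=> ab; apply/subsetP => j; rewrite !inE => /andP [/andP [hj ua] /andP [_ ub]].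
move: ua ub; rewrite /u1 /msg1 hj.
case: (eqVneq j a) => [->|ja] /=.
  rewrite (negPf ab) /= => _ /eqP [_ E]; by rewrite E eqxx.
case: (eqVneq j b) => [->|jb] /=.
  by move=> /eqP [_ E] _; rewrite E eqxx.
by move=> /eqP [_ E1] /eqP [_ E2]; rewrite -E1 -E2 eqxx.
Qed.

Lemma nb_card (F : fieldType) (n t l : nat) (alpha : nat -> F)
  (enc : l.-tuple bool -> 'rV[F]_(cool_k t)) (D : {set 'I_n})
  (w : 'I_n -> l.-tuple bool) (adv1 : 'I_n -> 'I_n -> F * F) (a : 'I_n) :
  s1 alpha enc D w adv1 a ->
  (n - t <= #|[set j | honest D j && u1 alpha enc D w adv1 a j]| + #|D|)%N.
Proof.
rewrite /s1 => H; apply: leq_trans H _.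
apply: leq_trans (leq_card_setU _ _).
apply: subset_leq_card; apply/subsetP => j; rewrite !inE /honest => u.
by rewrite u andbT; case: (j \in D); rewrite ?orbT.
Qed.

Lemma card_union3 (T : finType) (A B C : {set T}) :
  (#|A| + #|B| + #|C| <= #|A :|: B :|: C| + #|A :&: B| + #|A :&: C| + #|B :&: C|)%N.
Proof.
have h1 := cardsUI A B.
have h2 := cardsUI (A :|: B) C.
have h3 := cardsUI (A :&: C) (B :&: C).
have h4 : (#|(A :|: B) :&: C| <= #|A :&: C| + #|B :&: C|)%N by rewrite setIUl -h3 leq_addr.
lia.
Qed.

Lemma no_three (F : fieldType) (n t l : nat) (alpha : nat -> F)
  (enc : l.-tuple bool -> 'rV[F]_(cool_k t)) (D : {set 'I_n})
  (w : 'I_n -> l.-tuple bool) (adv1 : 'I_n -> 'I_n -> F * F) (a b c : 'I_n) :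
  (3 * t + 1 <= n)%N ->
  {in [pred m : nat | (m < n)%N] &, injective alpha} ->
  (#|D| <= t)%N ->
  honest D a -> honest D b -> honest D c ->
  s1 alpha enc D w adv1 a -> s1 alpha enc D w adv1 b -> s1 alpha enc D w adv1 c ->
  enc (w a) != enc (w b) -> enc (w a) != enc (w c) -> enc (w b) != enc (w c) ->
  False.
Proof.
move=> Hn Hinj HD ha hb hc sa sb sc eab eac ebc.
have Hk : (cool_k t <= n)%N by rewrite /cool_k; have := leq_div t 5; lia.
have neq : forall x y : 'I_n, enc (w x) != enc (w y) -> x != y.
  by move=> x y; apply: contra => /eqP ->.
set Na := [set j | honest D j && u1 alpha enc D w adv1 a j].
set Nb := [set j | honest D j && u1 alpha enc D w adv1 b j].
set Nc := [set j | honest D j && u1 alpha enc D w adv1 c j].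
have ca : (n - t <= #|Na| + #|D|)%N := nb_card sa.
have cb : (n - t <= #|Nb| + #|D|)%N := nb_card sb.
have cc : (n - t <= #|Nc| + #|D|)%N := nb_card sc.
have iab : (#|Na :&: Nb| < cool_k t)%N.
  apply: leq_ltn_trans (subset_leq_card (@inter_sub _ _ _ _ alpha enc D w adv1 _ _ (neq _ _ eab))) _.
  exact: rs_agree.
have iac : (#|Na :&: Nc| < cool_k t)%N.
  apply: leq_ltn_trans (subset_leq_card (@inter_sub _ _ _ _ alpha enc D w adv1 _ _ (neq _ _ eac))) _.
  exact: rs_agree.
have ibc : (#|Nb :&: Nc| < cool_k t)%N.
  apply: leq_ltn_trans (subset_leq_card (@inter_sub _ _ _ _ alpha enc D w adv1 _ _ (neq _ _ ebc))) _.
  exact: rs_agree.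
have U : (#|Na :|: Nb :|: Nc| + #|D| <= n)%N.
  have : Na :|: Nb :|: Nc \subset ~: D.
    by apply/subsetP => j; rewrite !inE /honest -!andb_orr => /andP [].
  move/subset_leq_card; have := cardsC D; rewrite card_ord; move=> E H; by rewrite -[X in (_ <= X)%N]E addnC leq_add2l.
have := card_union3 Na Nb Nc.
have := leq_trunc_div t 5.
move: iab iac ibc; rewrite /cool_k.
lia.
Qed.

Lemma pick3 (T : finType) (S : {set T}) : (2 < #|S|)%N ->
  exists x y z, [/\ x \in S, y \in S, z \in S & [/\ x != y, x != z & y != z]].
Proof.
move=> H.
have [x xS] : exists x, x \in S by apply/set0Pn; rewrite -card_gt0; lia.
have H1 := cardsD1 x S; rewrite xS in H1.
have [y yS] : exists y, y \in S :\ x by apply/set0Pn; rewrite -card_gt0; lia.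
have H2 := cardsD1 y (S :\ x); rewrite yS in H2.
have [z zS] : exists z, z \in S :\ x :\ y by apply/set0Pn; rewrite -card_gt0; lia.
move: yS zS; rewrite !inE => /andP [yx yS] /andP [zy /andP [zx zS]].
exists x, y, z; split => //; split; by rewrite eq_sym.
Qed.

Theorem lemma13 (n t l c : nat) (F : finFieldType) (alpha : nat -> F)
  (enc : l.-tuple bool -> 'rV[F]_(cool_k t))
  (D : {set 'I_n}) (w : 'I_n -> l.-tuple bool)
  (adv1 : 'I_n -> 'I_n -> F * F) (adv2 : 'I_n -> 'I_n -> bool) :
  (3 * t + 1 <= n)%N ->
  is_cool_c n t l c ->
  #|F| = (2 ^ c)%N ->
  {in [pred m : nat | (m < n)%N] &, injective alpha} ->
  (forall m : nat, (m < n)%N -> alpha m != 0) ->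
  injective enc ->
  (#|D| <= t)%N ->
  eta D w (s2 alpha enc D w adv1 adv2) = 2%N ->
  eta D w (s1 alpha enc D w adv1) = 2%N.
Proof.
move=> Hn _ _ Hinj _ Henc HD.
rewrite /eta => E2.
apply/eqP; rewrite eqn_leq; apply/andP; split; last first.
  rewrite -E2; apply: subset_leq_card; apply: imsetS; apply/subsetP => i.
  by rewrite !inE => /andP [-> /andP [-> _]].
rewrite leqNgt; apply/negP => /pick3 [x [y [z [xS yS zS [xy xz yz]]]]].
move/imsetP: xS => [a]; rewrite inE => /andP [ha sa] Ex.
move/imsetP: yS => [b]; rewrite inE => /andP [hb sb] Ey.
move/imsetP: zS => [c']; rewrite inE => /andP [hc sc] Ez.
subst x y z.
rewrite -!(inj_eq Henc) in xy xz yz.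
exact: (@no_three _ n t l alpha enc D w adv1 a b c' Hn Hinj HD ha hb hc sa sb sc xy xz yz).
Qed.
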